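(* For $\alpha\ge1$ and $y>0$ let $G_\alpha(y)=\sum_{k\in\mathbb{Z}}e^{-\pi\alpha k^2/y}\cos\big(2\pi k(\tfrac12-\tfrac1{8y^2})\big)$. Then $$\max_{y\ge\frac{\sqrt3}2+\frac1{4\sqrt\alpha}}G_\alpha(y)=G_\alpha\Big(\tfrac{\sqrt3}2+\tfrac1{4\sqrt\alpha}\Big)\le G_\alpha\Big(\tfrac{\sqrt3}2\Big)-\tfrac{2\sqrt\alpha}{3}e^{-\frac{2\pi\alpha}{\sqrt3}}.$$ *)

(* Defs.v *)
From Stdlib Require Import Reals ZArith.
From Coquelicot Require Import Coquelicot.
Open Scope R_scope.

Definition Gterm (alpha y : R) (k : Z) : R :=
  exp (- PI * alpha * (IZR k) ^ 2 / y) *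
  cos (2 * PI * IZR k * (1 / 2 - 1 / (8 * y ^ 2))).

(* G_alpha(y) = sum_{k in Z} Gterm alpha y k, written as the k = 0 term plus
   the (absolutely convergent) series over k = n+1 and k = -(n+1), n >= 0. *)
Definition G (alpha y : R) : R :=
  Gterm alpha y 0 +
  Series (fun n : nat => Gterm alpha y (Z.of_nat (S n)) + Gterm alpha y (- Z.of_nat (S n))).

(* Main.v *)
Require Import Defs.
From Stdlib Require Import Reals ZArith Lra Lia Psatz.
From Coquelicot Require Import Coquelicot.
Open Scope R_scope.

Lemma exp_nat_mul (n:nat) (x:R) : exp (INR n * x) = exp x ^ n.
Proof.
  induction n.
  - simpl. rewrite Rmult_0_l, exp_0; ring.
  - rewrite S_INR, Rmult_plus_distr_r, Rmult_1_l, exp_plus, IHn. simpl; ring.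
Qed.

Lemma exp_lb8 x : 0 <= x -> (1 + x/8)^8 <= exp x.
Proof.
  intros hx. replace x with (INR 8 * (x/8)) at 2 by (simpl; field).
  rewrite exp_nat_mul. apply pow_incr. split. lra.
  pose proof (exp_ineq1_le (x/8)); lra.
Qed.

Definition Fk (L:R) (k:nat) := exp (- L * INR k ^ 2).
Definition Ck (ph:R) (k:nat) := cos (INR k * ph).

Lemma Fk_pow L k : Fk L k = exp (-L) ^ (k*k).
Proof.
  unfold Fk. rewrite <- exp_nat_mul. f_equal. rewrite mult_INR. ring.
Qed.

Lemma Gpair alpha y k : 0 < y ->
  Gterm alpha y (Z.of_nat k) + Gterm alpha y (- Z.of_nat k) =
  2 * Fk (PI*alpha/y) k * Ck (PI - PI/(4*y^2)) k.
Proof.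
  intros hy. unfold Gterm, Fk, Ck. rewrite opp_IZR, <- INR_IZR_INZ.
  replace (- PI * alpha * (- INR k) ^ 2 / y) with (- (PI * alpha / y) * INR k ^ 2) by (field; lra).
  replace (- PI * alpha * INR k ^ 2 / y) with (- (PI * alpha / y) * INR k ^ 2) by (field; lra).
  replace (2 * PI * - INR k * (1 / 2 - 1 / (8 * y ^ 2))) with (- (INR k * (PI - PI / (4 * y ^ 2)))) by (field; lra).
  replace (2 * PI * INR k * (1 / 2 - 1 / (8 * y ^ 2))) with (INR k * (PI - PI / (4 * y ^ 2))) by (field; lra).
  rewrite cos_neg. ring.
Qed.

Lemma G_eq alpha y : 0 < y ->
  G alpha y = 1 + Series (fun n => 2 * Fk (PI*alpha/y) (S n) * Ck (PI - PI/(4*y^2)) (S n)).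
Proof.
  intros hy. unfold G. f_equal.
  - unfold Gterm. simpl IZR. replace (- PI * alpha * 0 ^ 2 / y) with 0 by (field; lra).
    replace (2 * PI * 0 * (1 / 2 - 1 / (8 * y ^ 2))) with 0 by ring.
    rewrite exp_0, cos_0; ring.
  - apply Series_ext. intros n. rewrite <- Gpair by lra. reflexivity.
Qed.
Lemma geo_bound (u: nat -> R) K r : 0 <= r < 1 ->
  (forall n, Rabs (u n) <= K * r^n) -> ex_series u /\ Rabs (Series u) <= K / (1 - r).
Proof.
  intros hr hu.
  assert (hg : ex_series (fun n => K * r^n)).
  { apply (ex_series_scal_l K (fun n => r^n)). apply ex_series_geom. rewrite Rabs_pos_eq; lra. }
  assert (ha : ex_series (fun n => Rabs (u n))).
  { apply (ex_series_le (fun n => Rabs (u n)) (fun n => K * r^n)); [intros n|exact hg].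
    change (norm (Rabs (u n))) with (Rabs (Rabs (u n))). rewrite Rabs_pos_eq by apply Rabs_pos. apply hu. }
  split.
  - apply ex_series_Rabs. exact ha.
  - eapply Rle_trans. apply Series_Rabs; exact ha.
    eapply Rle_trans. apply Series_le with (2 := hg). intros n; split. apply Rabs_pos. apply hu.
    rewrite Series_scal_l, Series_geom. unfold Rdiv; lra. rewrite Rabs_pos_eq; lra.
Qed.
Fixpoint SS (L ph : R) (N:nat) : R := match N with
  | O => Fk L 0 * Ck ph 0
  | S m => SS L ph m + 2 * Fk L (S m) * Ck ph (S m) end.
Definition hh L m := Fk L m - Fk L (S m).
Definition DD L m := Fk L (S (S m)) - 2 * Fk L (S m) + Fk L m.
Fixpoint TT L ph N := match N with
  | O => 2*(Fk L 1 - Fk L 0)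
  | S m => TT L ph m + 2 * DD L m * Ck ph (S m) end.
Fixpoint UU L N := match N with O => 0 | S m => UU L m + Rabs (DD L m) end.

Lemma Ck_rec ph n : Ck ph (S (S n)) + Ck ph n = 2 * cos ph * Ck ph (S n).
Proof.
  unfold Ck. rewrite form1. rewrite !S_INR.
  replace ((INR n + 1 + 1) * ph - INR n * ph) with (2 * ph) by ring.
  replace ((INR n + 1 + 1) * ph + INR n * ph) with (2 * ((INR n + 1) * ph)) by ring.
  replace (2 * ph / 2) with ph by field. replace (2 * ((INR n + 1) * ph) / 2) with ((INR n + 1) * ph) by field.
  ring.
Qed.

Lemma SS_TT_id L ph N :
  (2 - 2 * cos ph) * SS L ph N + TT L ph N = 2 * (Fk L (S N) * Ck ph N - Fk L N * Ck ph (S N)).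
Proof.
  induction N.
  - simpl. unfold Ck. simpl. rewrite Rmult_0_l, Rmult_1_l, cos_0. ring.
  - simpl SS; simpl TT. pose proof (Ck_rec ph N) as HR. unfold DD.
    replace ((2 - 2 * cos ph) * (SS L ph N + 2 * Fk L (S N) * Ck ph (S N)) +
      (TT L ph N + 2 * (Fk L (S (S N)) - 2 * Fk L (S N) + Fk L N) * Ck ph (S N)))
     with (((2 - 2 * cos ph) * SS L ph N + TT L ph N) + (2 * Fk L (S (S N)) * Ck ph (S N) + 2 * Fk L N * Ck ph (S N)
       - 2 * Fk L (S N) * (2 * cos ph * Ck ph (S N)))) by ring.
    rewrite IHN, <- HR. ring.
Qed.

Lemma Ck_abs ph k : Rabs (Ck ph k) <= 1.
Proof. unfold Ck. apply Rabs_le; pose proof (COS_bound (INR k * ph)); lra. Qed.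

Lemma Fk_pos L k : 0 < Fk L k.
Proof. apply exp_pos. Qed.

Lemma cosh_mono a b : 0 <= a <= b -> exp a + exp (-a) <= exp b + exp (-b).
Proof.
  intros [ha hab]. rewrite !exp_Ropp.
  assert (h1 : 1 <= exp a) by (pose proof (exp_ineq1_le a); lra).
  assert (h2 : exp a <= exp b) by (destruct (Req_dec a b); [subst; lra| left; apply exp_increasing; lra]).
  assert (exp b + / exp b - (exp a + / exp a) = (exp b - exp a) * (1 - / (exp a * exp b))) by (field; split; apply exp_neq_0).
  assert (0 <= 1 - / (exp a * exp b)).
  { assert (1 <= exp a * exp b) by nra.
    assert (/ (exp a * exp b) <= 1). { rewrite <- Rinv_1. apply Rinv_le_contravar; lra. } lra. }
  nra.
Qed.

Lemma Fk_shift1 L n : Fk L (S n) * exp (-L) = Fk L (S (S n)) * exp (2 * L * INR (S n)).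
Proof. unfold Fk. rewrite <- !exp_plus. f_equal. rewrite !S_INR. ring. Qed.
Lemma Fk_shift2 L n : Fk L (S n) * exp (-L) * exp (2 * L * INR (S n)) = Fk L n.
Proof. unfold Fk. rewrite <- !exp_plus. f_equal. rewrite !S_INR. ring. Qed.

Lemma key_step L m : 0 <= L -> hh L (S m) <= hh L m -> hh L (S (S m)) <= hh L (S m).
Proof.
  intros hL H. unfold hh in *.
  pose proof (Fk_shift1 L m) as A1. pose proof (Fk_shift2 L m) as A2.
  pose proof (Fk_shift1 L (S m)) as B1. pose proof (Fk_shift2 L (S m)) as B2.
  set (A := exp (-L)) in *. set (E1 := exp (2 * L * INR (S m))) in *.
  set (E2 := exp (2 * L * INR (S (S m)))) in *.
  assert (hc : E1 + / E1 <= E2 + / E2).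
  { unfold E1, E2. rewrite <- !exp_Ropp. apply cosh_mono. rewrite !S_INR. pose proof (pos_INR m). split; nra. }
  pose proof (Fk_pos L m). pose proof (Fk_pos L (S m)). pose proof (Fk_pos L (S (S m))). pose proof (Fk_pos L (S (S (S m)))).
  assert (0 < A) by apply exp_pos. assert (0 < E1) by apply exp_pos. assert (0 < E2) by apply exp_pos.
  set (P0 := Fk L m) in *. set (P1 := Fk L (S m)) in *. set (P2 := Fk L (S (S m))) in *. set (P3 := Fk L (S (S (S m)))) in *.
  assert (hP2 : P2 = P1 * A / E1) by (rewrite A1; field; lra).
  assert (hP3 : P3 = P2 * A / E2) by (rewrite B1; field; lra).
  assert (hA : 2 <= A * (E1 + / E1)).
  { assert (2 * P1 <= P1 * A * E1 + P1 * A / E1) by (rewrite A2, <- hP2; lra).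
    apply Rmult_le_reg_l with P1; [lra|]. unfold Rdiv in *. nra. }
  assert (hB : 2 <= A * (E2 + / E2)) by nra.
  rewrite hP3, <- B2. unfold Rdiv. nra.
Qed.

Lemma hh_nonneg L k : 0 <= L -> 0 <= hh L k.
Proof.
  intros hL. unfold hh, Fk. destruct (Req_dec L 0).
  - subst. replace (-0 * INR k ^ 2) with 0 by ring. replace (-0 * INR (S k) ^ 2) with 0 by ring. lra.
  - left. apply Rlt_Rminus. apply exp_increasing. rewrite S_INR. pose proof (pos_INR k). nra.
Qed.

Lemma DD_hh L m : DD L m = hh L m - hh L (S m).
Proof. unfold DD, hh. ring. Qed.

Lemma UU_inv L M : 0 <= L -> (forall k, hh L k <= M) -> forall N,
  UU L N + hh L 0 + hh L N <= 2 * M /\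
  (UU L N = hh L N - hh L 0 \/ exists m, N = S m /\ hh L (S m) <= hh L m).
Proof.
  intros hL hM. induction N.
  - simpl. pose proof (hM 0%nat). split; [lra | left; ring].
  - destruct IHN as [I1 I2]. simpl UU. rewrite DD_hh.
    destruct (Rle_lt_dec (hh L (S N)) (hh L N)) as [Hle | Hlt].
    + rewrite Rabs_pos_eq by lra. split; [lra|]. right. exists N. split; auto.
    + rewrite Rabs_left by lra.
      destruct I2 as [E | [m [Em Hm]]].
      * pose proof (hM (S N)). split; [lra | left; lra].
      * subst N. pose proof (key_step L m hL Hm). lra.
Qed.

Lemma TT_bound L ph N : 0 <= L -> Rabs (TT L ph N) <= 2 * hh L 0 + 2 * UU L N.
Proof.
  intros hL. induction N.
  - simpl TT. replace (2*(Fk L 1 - Fk L 0)) with (-(2*hh L 0)) by (unfold hh; ring).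
    rewrite Rabs_Ropp, Rabs_pos_eq. simpl; lra. pose proof (hh_nonneg L 0 hL); lra.
  - simpl. eapply Rle_trans. apply Rabs_triang. rewrite !Rabs_mult. pose proof (Ck_abs ph (S N)).
    pose proof (Rabs_pos (DD L N)). rewrite (Rabs_pos_eq 2) by lra. nra.
Qed.

Lemma exp_ge_2x w : 0 <= w -> 2 * w <= exp w.
Proof.
  intros hw. replace w with (INR 2 * (w/2)) at 2 by (simpl; field).
  rewrite exp_nat_mul. pose proof (exp_ineq1_le (w/2)). simpl.
  set (e := exp (w/2)) in *. assert (0 <= 1 + w/2) by lra.
  assert ((1 + w/2) * (1 + w/2) <= e * e) by (apply Rmult_le_compat; lra).
  assert (0 <= (1 - w/2) * (1 - w/2)) by (apply Rle_0_sqr).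
  rewrite Rmult_1_r. lra.
Qed.

Lemma hh_bound L k : 0 < L -> hh L k <= sqrt L.
Proof.
  intros hL. unfold hh, Fk.
  set (f := fun x => exp (- L * x ^ 2)).
  destruct (MVT_gen f (INR k) (INR (S k)) (fun x => -2 * L * x * exp (- L * x ^ 2))) as [c [hc Hc]].
  - intros x _. unfold f. auto_derive; [auto| simpl; ring].
  - intros z _. apply continuity_pt_filterlim. apply (ex_derive_continuous f). unfold f. auto_derive. auto.
  - assert (hk1 : INR k <= INR (S k)) by (rewrite S_INR; lra). rewrite (Rmin_left _ _ hk1), (Rmax_right _ _ hk1) in hc.
    change (exp (- L * INR k ^ 2) - exp (- L * INR (S k) ^ 2)) with (f (INR k) - f (INR (S k))).
    replace (f (INR k) - f (INR (S k))) with (2 * L * c * exp (- L * c ^ 2)) by (replace (INR (S k) - INR k) with 1 in Hc by (rewrite S_INR; ring); lra).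
    pose proof (pos_INR k). assert (0 <= c) by lra.
    set (w := 2 * L * c ^ 2). assert (0 <= w) by (unfold w; nra).
    assert (E : exp (- L * c ^ 2) * exp (- L * c ^ 2) = / exp w).
    { rewrite <- exp_plus, <- exp_Ropp. f_equal. unfold w. ring. }
    pose proof (exp_ge_2x w H1). pose proof (exp_pos w). pose proof (exp_pos (- L * c ^ 2)).
    apply Rsqr_incr_0_var; [| apply sqrt_pos]. rewrite Rsqr_sqrt by lra. unfold Rsqr.
    replace (2 * L * c * exp (- L * c ^ 2) * (2 * L * c * exp (- L * c ^ 2))) with
      (2 * L * w * (exp (- L * c ^ 2) * exp (- L * c ^ 2))) by (unfold w; ring).
    rewrite E. apply Rmult_le_reg_r with (exp w); [lra|]. rewrite Rmult_assoc, Rinv_l by lra. nra.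
Qed.

Lemma pow_le_dec r m n : 0 <= r <= 1 -> (m <= n)%nat -> r ^ n <= r ^ m.
Proof.
  intros hr hmn. replace n with (m + (n - m))%nat by lia. rewrite pow_add.
  pose proof (pow_le r m (proj1 hr)). pose proof (pow_le r (n-m) (proj1 hr)).
  assert (r ^ (n - m) <= 1).
  { clear hmn. induction (n - m)%nat. simpl; lra. simpl. nra. }
  nra.
Qed.

Lemma Fk_le_geom L k : 0 <= L -> Fk L k <= exp (-L) ^ k.
Proof.
  intros hL. rewrite Fk_pow. apply pow_le_dec.
  - split. left; apply exp_pos. rewrite <- exp_0. destruct (Req_dec L 0). subst. rewrite Ropp_0. lra.
    left. apply exp_increasing. lra.
  - destruct k; simpl; lia.
Qed.

Lemma SS_sum L ph N : SS L ph (S N) = Fk L 0 * Ck ph 0 + sum_n (fun n => 2 * Fk L (S n) * Ck ph (S n)) N.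
Proof.
  induction N.
  - simpl. rewrite sum_O. reflexivity.
  - change (SS L ph (S (S N))) with (SS L ph (S N) + 2 * Fk L (S (S N)) * Ck ph (S (S N))).
    rewrite IHN, sum_Sn. unfold plus; simpl. ring.
Qed.

Lemma Fk0 L : Fk L 0 = 1.
Proof. unfold Fk. replace (- L * INR 0 ^ 2) with 0 by (simpl; ring). apply exp_0. Qed.
Lemma Ck0 ph : Ck ph 0 = 1.
Proof. unfold Ck. simpl. rewrite Rmult_0_l. apply cos_0. Qed.

Lemma Fk_series_ex L ph : 0 < L -> ex_series (fun n => 2 * Fk L (S n) * Ck ph (S n)).
Proof.
  intros hL. set (r := exp (-L)).
  assert (hr : 0 <= r < 1). { unfold r; split. left; apply exp_pos. rewrite <- exp_0. apply exp_increasing. lra. }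
  refine (proj1 (geo_bound _ (2 * r) r hr _)). intros n.
  rewrite Rabs_mult, Rabs_mult, Rabs_pos_eq by lra. rewrite (Rabs_pos_eq (Fk L (S n))) by (left; apply Fk_pos).
  pose proof (Fk_le_geom L (S n) (Rlt_le _ _ hL)). pose proof (Ck_abs ph (S n)). pose proof (Fk_pos L (S n)).
  simpl in H. fold r in H. assert (Rabs (Ck ph (S n)) <= 1) by auto. pose proof (Rabs_pos (Ck ph (S n))). nra.
Qed.

Lemma far_bound L ph : 0 < L -> cos ph < 1 ->
  Rabs (1 + Series (fun n => 2 * Fk L (S n) * Ck ph (S n))) * (2 - 2 * cos ph) <= 4 * sqrt L.
Proof.
  intros hL hc. set (a := fun n => 2 * Fk L (S n) * Ck ph (S n)).
  assert (hex : ex_series a) by (apply Fk_series_ex; auto).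
  assert (hN : forall N, Rabs (SS L ph (S N)) * (2 - 2 * cos ph) <= 4 * sqrt L + 2 * (Fk L (S (S N)) + Fk L (S N))).
  { intros N. pose proof (SS_TT_id L ph (S N)) as Hid.
    pose proof (TT_bound L ph (S N) (Rlt_le _ _ hL)) as HT.
    destruct (UU_inv L (sqrt L) (Rlt_le _ _ hL) (fun k => hh_bound L k hL) (S N)) as [HU _].
    pose proof (hh_nonneg L (S N) (Rlt_le _ _ hL)).
    assert (HB : Rabs (2 * (Fk L (S (S N)) * Ck ph (S N) - Fk L (S N) * Ck ph (S (S N)))) <= 2 * (Fk L (S (S N)) + Fk L (S N))).
    { rewrite Rabs_mult, Rabs_pos_eq by lra. apply Rmult_le_compat_l; [lra|].
      eapply Rle_trans. apply Rabs_triang. rewrite Rabs_Ropp, !Rabs_mult.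
      rewrite (Rabs_pos_eq (Fk L _)) by (left; apply Fk_pos). rewrite (Rabs_pos_eq (Fk L (S N))) by (left; apply Fk_pos).
      pose proof (Ck_abs ph (S N)). pose proof (Ck_abs ph (S (S N))). pose proof (Fk_pos L (S N)). pose proof (Fk_pos L (S (S N))).
      pose proof (Rabs_pos (Ck ph (S N))). pose proof (Rabs_pos (Ck ph (S (S N)))). nra. }
    assert (E : SS L ph (S N) * (2 - 2 * cos ph) = 2 * (Fk L (S (S N)) * Ck ph (S N) - Fk L (S N) * Ck ph (S (S N))) - TT L ph (S N)) by lra.
    rewrite <- (Rabs_pos_eq (2 - 2 * cos ph)) by lra. rewrite <- Rabs_mult, E.
    eapply Rle_trans. apply Rabs_triang. rewrite Rabs_Ropp. lra. }
  assert (L1 : is_lim_seq (fun N => Rabs (SS L ph (S N)) * (2 - 2 * cos ph)) (Rabs (1 + Series a) * (2 - 2 * cos ph))).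
  { apply (is_lim_seq_scal_r (fun N => Rabs (SS L ph (S N))) (2 - 2 * cos ph) (Rabs (1 + Series a))).
    apply (is_lim_seq_abs _ (1 + Series a)).
    apply is_lim_seq_ext with (fun N => 1 + sum_n a N).
    { intros N. rewrite SS_sum, Fk0, Ck0. unfold a. ring. }
    apply is_lim_seq_plus'. apply is_lim_seq_const. apply (Series_correct a hex). }
  assert (L0 : is_lim_seq (fun N => Fk L N) 0).
  { apply is_lim_seq_le_le with (fun _ => 0) (fun N => exp (-L) ^ N).
    - intros N. split. left; apply Fk_pos. apply Fk_le_geom; lra.
    - apply is_lim_seq_const.
    - apply is_lim_seq_geom. rewrite Rabs_pos_eq by (left; apply exp_pos). rewrite <- exp_0. apply exp_increasing; lra. }
  assert (L2 : is_lim_seq (fun N => 4 * sqrt L + 2 * (Fk L (S (S N)) + Fk L (S N))) (4 * sqrt L + 2 * (0 + 0))).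
  { apply is_lim_seq_plus'. apply is_lim_seq_const.
    apply (is_lim_seq_scal_l _ 2 (0 + 0)). apply is_lim_seq_plus'.
    - apply (is_lim_seq_incr_1 (fun N => Fk L (S N))). apply (is_lim_seq_incr_1 (fun N => Fk L N)). exact L0.
    - apply (is_lim_seq_incr_1 (fun N => Fk L N)). exact L0. }
  pose proof (is_lim_seq_le _ _ _ _ hN L1 L2). simpl in H. lra.
Qed.

Lemma abs_sin_le z : Rabs (sin z) <= Rabs z.
Proof.
  assert (H : forall z, 0 <= z -> Rabs (sin z) <= z).
  { intros x hx. apply Rabs_le. split.
    - destruct (Rle_dec x PI). pose proof (sin_ge_0 x hx r). lra.
      pose proof (SIN_bound x). pose proof PI2_1. lra.
    - destruct (Req_dec x 0). subst; rewrite sin_0; lra. left; apply sin_lt_x; lra. }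
  destruct (Rle_dec 0 z).
  - rewrite (Rabs_pos_eq z) by lra. apply H; lra.
  - replace z with (- (- z)) by ring. rewrite sin_neg, !Rabs_Ropp. rewrite (Rabs_left z) by lra. apply H; lra.
Qed.

Lemma sin_kpi k x : Rabs (sin (INR k * PI + x)) = Rabs (sin x).
Proof.
  induction k.
  - simpl. rewrite Rmult_0_l, Rplus_0_l. reflexivity.
  - rewrite S_INR. replace ((INR k + 1) * PI + x) with ((INR k * PI + x) + PI) by ring.
    rewrite neg_sin, Rabs_Ropp. exact IHk.
Qed.

Lemma sin_lb07 x : 0 <= x <= 4/3 -> 0.7 * x <= sin x.
Proof.
  intros hx. assert (hp : x <= PI) by (pose proof PI2_3_2; lra).
  destruct (sin_bound x 0 (proj1 hx) hp) as [H _].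
  unfold sin_approx, sin_term in H. simpl in H.
  assert (E : 1 * (x * 1 / 1) + -1 * 1 * (x * (x * (x * 1)) / (1 + 1 + 1 + 1 + 1 + 1)) = x - x^3/6) by (simpl; field).
  rewrite E in H. nra.
Qed.

Lemma cos_diff_bound th th0 k : 0 <= th -> th <= th0 -> th0 <= 4/3 ->
  Rabs (Ck (PI - th) k - Ck (PI - th0) k) <= 2.1 * INR (k * k) * (cos th - cos th0).
Proof.
  intros h1 h2 h3. unfold Ck. rewrite form2, form2.
  set (a := (th + th0)/2). set (b := (th0 - th)/2).
  replace ((INR k * (PI - th) - INR k * (PI - th0)) / 2) with (INR k * b) by (unfold b; field).
  replace ((INR k * (PI - th) + INR k * (PI - th0)) / 2) with (INR k * PI + - (INR k * a)) by (unfold a; field).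
  replace ((th - th0) / 2) with (- b) by (unfold b; field). replace ((th + th0) / 2) with a by reflexivity.
  rewrite sin_neg.
  rewrite !Rabs_mult, sin_kpi, sin_neg, Rabs_Ropp.
  pose proof (abs_sin_le (INR k * b)) as S1. pose proof (abs_sin_le (INR k * a)) as S2.
  pose proof (pos_INR k).
  rewrite (Rabs_pos_eq (INR k * b)) in S1 by (unfold b; apply Rmult_le_pos; lra).
  rewrite (Rabs_pos_eq (INR k * a)) in S2 by (unfold a; apply Rmult_le_pos; lra).
  assert (Rabs (-2) = 2) by (rewrite Rabs_left; lra). rewrite H0.
  pose proof (sin_lb07 a ltac:(unfold a; lra)). pose proof (sin_lb07 b ltac:(unfold b; lra)).
  assert (0 <= a) by (unfold a; lra). assert (0 <= b) by (unfold b; lra).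
  rewrite mult_INR.
  pose proof (Rabs_pos (sin (INR k * b))). pose proof (Rabs_pos (sin (INR k * a))).
  assert (Rabs (sin (INR k * b)) * Rabs (sin (INR k * a)) <= (INR k * b) * (INR k * a)) by (apply Rmult_le_compat; lra).
  assert ((0.7 * a) * (0.7 * b) <= sin a * sin b) by (apply Rmult_le_compat; nra).
  assert (0 <= INR k * INR k) by nra.
  assert (0 <= a * b) by nra.
  nra.
Qed.

Lemma pow_ratio q j : 0 <= q <= 0.55 ->
  INR ((j+2)*(j+2)) * q ^ (j*j + 4*j + 3) <= 4 * q^3 * (1/4)^j.
Proof.
  intros hq. induction j.
  - simpl. lra.
  - replace (S j * S j + 4 * S j + 3)%nat with ((j*j + 4*j + 3) + (2*j + 5))%nat by lia.
    rewrite pow_add.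
    assert (h5 : q ^ (2*j+5) <= q^5) by (apply pow_le_dec; [lra|lia]).
    assert (hq5 : q^5 <= 0.06). { assert (q^5 <= 0.55^5) by (apply pow_incr; lra). simpl in *. lra. }
    assert (hI : INR ((S j + 2) * (S j + 2)) <= 9/4 * INR ((j + 2) * (j + 2))).
    { rewrite !mult_INR, !plus_INR, S_INR. simpl. pose proof (pos_INR j). nra. }
    pose proof (pow_le q (j*j+4*j+3) (proj1 hq)). pose proof (pow_le q (2*j+5) (proj1 hq)).
    pose proof (pos_INR ((j + 2) * (j + 2))). pose proof (pos_INR ((S j + 2) * (S j + 2))).
    set (P := q ^ (j*j+4*j+3)) in *. set (Q := q ^ (2*j+5)) in *. set (I1 := INR ((j + 2) * (j + 2))) in *.
    set (I2 := INR ((S j + 2) * (S j + 2))) in *.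
    simpl ((1/4)^(S j)).
    assert (I2 * (P * Q) <= (9/4 * I1 * P) * 0.06).
    { assert (I2 * P <= 9/4 * I1 * P) by (apply Rmult_le_compat_r; lra).
      assert (0 <= I2 * P) by nra. nra. }
    nra.
Qed.

Lemma pow_diff x y m : 0 <= y <= x -> x ^ (S m) - y ^ (S m) <= INR (S m) * x ^ m * (x - y).
Proof.
  intros hxy. induction m.
  - simpl. lra.
  - change (x ^ S (S m)) with (x * x ^ S m). change (y ^ S (S m)) with (y * y ^ S m).
    assert (HY : y ^ S m <= x ^ S m) by (apply pow_incr; lra).
    rewrite S_INR.
    assert (A : x * (x ^ S m - y ^ S m) <= x * (INR (S m) * x ^ m * (x - y))) by (apply Rmult_le_compat_l; lra).
    assert (B : y ^ S m * (x - y) <= x ^ S m * (x - y)) by (apply Rmult_le_compat_r; lra).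
    change (x ^ S m) with (x * x ^ m) in *.
    set (Xm := x ^ m) in *. set (Y := y ^ S m) in *. set (I := INR (S m)) in *.
    lra.
Qed.

Definition aser L ph := fun n => 2 * Fk L (S n) * Ck ph (S n).

Lemma near_cmp L th L0 th0 : 0 < L -> L <= L0 -> exp (-L) <= 0.55 -> exp (-L0) <= 0.1 ->
  16/3 * exp (-L) ^ 3 <= cos th -> 0 <= th -> th <= th0 -> th0 <= 4/3 ->
  Series (aser L (PI - th)) <= Series (aser L0 (PI - th0)).
Proof.
  intros hL hLL hq hq0 hqc h1 h2 h3.
  set (q := exp (-L)) in *. set (q0 := exp (-L0)) in *.
  assert (hqq : q0 <= q). { unfold q0, q. destruct (Req_dec L L0). subst; lra. left; apply exp_increasing; lra. }
  assert (hq0p : 0 < q0) by apply exp_pos.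
  assert (hcc : cos th0 <= cos th).
  { destruct (Req_dec th th0). subst; lra. left. apply cos_decreasing_1; try lra; pose proof PI2_3_2; lra. }
  set (c := cos th) in *. set (c0 := cos th0) in *.
  assert (ex1 : ex_series (aser L (PI - th))) by (apply Fk_series_ex; lra).
  assert (ex2 : ex_series (aser L0 (PI - th0))) by (apply Fk_series_ex; lra).
  assert (exd : ex_series (fun n => aser L (PI - th) n - aser L0 (PI - th0) n)) by exact (ex_series_minus _ _ ex1 ex2).
  apply Rminus_le. rewrite <- Series_minus by assumption.
  rewrite Series_incr_1 by assumption.
  set (K := 2 * (4 * q^3 * (q - q0) + 2.1 * (4 * q0^4) * (c - c0))).
  destruct (geo_bound (fun k => aser L (PI - th) (S k) - aser L0 (PI - th0) (S k)) K (1/4) ltac:(lra)) as [_ HB].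
  { intros j. unfold aser. replace (S (S j)) with (j + 2)%nat by lia.
    rewrite !Fk_pow. fold q q0.
    pose proof (pow_diff q q0 (j*j+4*j+3) ltac:(lra)) as PD.
    pose proof (pow_ratio q j ltac:(pose proof (exp_pos (-L)); fold q in H; lra)) as PR.
    pose proof (pow_ratio q0 j ltac:(lra)) as PR0.
    replace (S (j * j + 4 * j + 3)) with ((j+2)*(j+2))%nat in PD by lia.
    pose proof (cos_diff_bound th th0 (j+2) h1 h2 h3) as CD. fold c c0 in CD.
    pose proof (Ck_abs (PI - th) (j+2)) as CA.
    assert (HQ0 : q0 ^ ((j+2)*(j+2)) = q0 * q0 ^ (j*j+4*j+3)) by (replace ((j+2)*(j+2))%nat with (S (j*j+4*j+3)) by lia; reflexivity).
    assert (HQm : q0 ^ ((j+2)*(j+2)) <= q ^ ((j+2)*(j+2))) by (apply pow_incr; lra).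
    pose proof (pow_le q0 (j*j+4*j+3) ltac:(lra)).
    pose proof (pow_le ((1/4)) j ltac:(lra)).
    pose proof (pow_le q0 ((j+2)*(j+2)) ltac:(lra)).
    set (C := Ck (PI - th) (j+2)) in *. set (C0 := Ck (PI - th0) (j+2)) in *.
    set (I := INR ((j + 2) * (j + 2))) in *.
    set (P := q ^ (j * j + 4 * j + 3)) in *. set (P0 := q0 ^ (j * j + 4 * j + 3)) in *.
    set (Qk := q ^ ((j+2)*(j+2))) in *. set (Q0k := q0 ^ ((j+2)*(j+2))) in *.
    set (R4 := (1/4)^j) in *.
    assert (EQ : 2 * Qk * C - 2 * Q0k * C0 = 2 * ((Qk - Q0k) * C + Q0k * (C - C0))) by ring.
    rewrite EQ, Rabs_mult, (Rabs_pos_eq 2) by lra.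
    assert (T1 : Rabs ((Qk - Q0k) * C) <= I * P * (q - q0)).
    { rewrite Rabs_mult, Rabs_pos_eq by lra. pose proof (Rabs_pos C).
      apply Rle_trans with ((Qk - Q0k) * 1). apply Rmult_le_compat_l; lra. lra. }
    assert (T2 : Rabs (Q0k * (C - C0)) <= q0 * P0 * (2.1 * I * (c - c0))).
    { rewrite Rabs_mult, (Rabs_pos_eq Q0k) by lra. rewrite HQ0. apply Rmult_le_compat_l. nra. exact CD. }
    assert (T3 : I * P * (q - q0) <= 4 * q ^ 3 * R4 * (q - q0)) by (apply Rmult_le_compat_r; lra).
    assert (T4 : q0 * P0 * (2.1 * I * (c - c0)) <= 2.1 * q0 * (c - c0) * (4 * q0 ^ 3 * R4)).
    { replace (q0 * P0 * (2.1 * I * (c - c0))) with (2.1 * q0 * (c - c0) * (I * P0)) by ring.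
      apply Rmult_le_compat_l; [nra|lra]. }
    pose proof (Rabs_triang ((Qk - Q0k) * C) (Q0k * (C - C0))).
    unfold K. replace (q0 ^ 4) with (q0 * q0 ^ 3) by (simpl; ring). nra.
  }
  assert (D0 : aser L (PI - th) 0 - aser L0 (PI - th0) 0 = - (2 * c * (q - q0) + 2 * q0 * (c - c0))).
  { unfold aser, Ck. rewrite !Fk_pow. fold q q0.
    replace (INR 1 * (PI - th)) with (PI - th) by (simpl; ring).
    replace (INR 1 * (PI - th0)) with (PI - th0) by (simpl; ring).
    rewrite !Rtrigo_facts.cos_pi_minus. fold c c0. simpl. ring. }
  rewrite D0.
  pose proof (Rabs_le_between (Series (fun k : nat => aser L (PI - th) (S k) - aser L0 (PI - th0) (S k))) (K / (1 - 1/4))) as [HB2 _].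
  specialize (HB2 HB). unfold K in *.
  assert (hq3 : q0 ^ 3 <= 0.001). { assert (q0 ^ 3 <= 0.1 ^ 3) by (apply pow_incr; lra). simpl in *; lra. }
  replace (q0 ^ 4) with (q0 * q0 ^ 3) in * by (simpl; ring).
  assert (0 <= q - q0) by lra. assert (0 <= c - c0) by lra.
  assert (16/3 * q^3 * (q - q0) <= c * (q - q0)) by (apply Rmult_le_compat_r; lra).
  assert (q0 * q0 ^ 3 * (c - c0) <= q0 * 0.001 * (c - c0)) by (apply Rmult_le_compat_r; [lra|apply Rmult_le_compat_l; lra]).
  set (S := Series (fun k : nat => aser L (PI - th) (S k) - aser L0 (PI - th0) (S k))) in *.
  destruct HB2 as [_ HB3].
  assert (0 <= q0 * (c - c0)) by nra.
  lra.
Qed.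

Lemma exp_neg_le x a b : a <= x -> 0 < b -> 1 / b <= exp a -> exp (- x) <= b.
Proof.
  intros h1 h2 h3. rewrite exp_Ropp.
  assert (exp a <= exp x) by (destruct (Req_dec a x); [subst; lra| left; apply exp_increasing; lra]).
  pose proof (exp_pos x). apply Rmult_le_reg_l with (exp x); [lra|].
  rewrite Rinv_r by lra. assert (1/b * b = 1) by (field; lra). nra.
Qed.

Lemma N065 x : 0.65 <= x -> exp (- x) <= 0.55.
Proof. intros h. apply (exp_neg_le x 0.65); try lra. eapply Rle_trans; [|apply exp_lb8; lra]. simpl. lra. Qed.

Lemma N15 x : 1.5 <= x -> exp (- x) <= 0.26.
Proof. intros h. apply (exp_neg_le x 1.5); try lra. eapply Rle_trans; [|apply exp_lb8; lra]. simpl. lra. Qed.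

Lemma N2688 x : 2.688 <= x -> exp (- x) <= 0.0757.
Proof.
  intros h. apply (exp_neg_le x 2.688); try lra.
  replace 2.688 with (INR 4 * 0.672) by (simpl; lra). rewrite exp_nat_mul.
  pose proof (exp_lb8 0.672 ltac:(lra)).
  apply Rle_trans with (((1 + 0.672/8)^8)^4). simpl; lra.
  apply pow_incr. split; [simpl; lra | exact H].
Qed.

Lemma tail_bound L ph : 0 < L -> exp (-L) <= 0.55 ->
  Rabs (Series (fun k => aser L ph (S k))) <= 32/3 * exp (-L) ^ 4.
Proof.
  intros hL hq. set (q := exp (-L)) in *. assert (0 < q) by apply exp_pos.
  destruct (geo_bound (fun k => aser L ph (S k)) (8 * q^4) (1/4) ltac:(lra)) as [_ HB].
  - intros j. unfold aser. replace (S (S j)) with (j+2)%nat by lia. rewrite Fk_pow. fold q.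
    pose proof (pow_ratio q j ltac:(lra)) as PR.
    pose proof (Ck_abs ph (j+2)).
    assert (HQ : q ^ ((j+2)*(j+2)) = q * q ^ (j*j+4*j+3)) by (replace ((j+2)*(j+2))%nat with (S (j*j+4*j+3)) by lia; reflexivity).
    assert (HI : 1 <= INR ((j+2)*(j+2))). { rewrite mult_INR, plus_INR. simpl. pose proof (pos_INR j). nra. }
    pose proof (pow_le q (j*j+4*j+3) ltac:(lra)).
    pose proof (pow_le (1/4) j ltac:(lra)).
    rewrite HQ. set (P := q ^ (j*j+4*j+3)) in *. set (I := INR ((j+2)*(j+2))) in *. set (R4 := (1/4)^j) in *.
    rewrite !Rabs_mult, (Rabs_pos_eq 2) by lra. rewrite (Rabs_pos_eq q) by lra. rewrite (Rabs_pos_eq P) by lra.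
    pose proof (Rabs_pos (Ck ph (j+2))).
    assert (q * P * Rabs (Ck ph (j + 2)) <= q * P) by (assert (0 <= q*P) by nra; nra).
    assert (q * P <= q * (4 * q^3 * R4)) by (apply Rmult_le_compat_l; nra).
    replace (q^4) with (q * q^3) by (simpl; ring). nra.
  - eapply Rle_trans. exact HB. lra.
Qed.

Lemma G_approx alpha y : 0 < y -> 0 < alpha -> exp (- (PI * alpha / y)) <= 0.55 ->
  Rabs (G alpha y - (1 - 2 * exp (- (PI * alpha / y)) * cos (PI / (4 * y ^ 2)))) <=
  32/3 * exp (- (PI * alpha / y)) ^ 4.
Proof.
  intros hy ha hq. assert (hL : 0 < PI * alpha / y) by (pose proof PI_RGT_0; apply Rdiv_lt_0_compat; nra).
  rewrite G_eq by lra. fold (aser (PI * alpha / y) (PI - PI / (4 * y ^ 2))).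
  rewrite Series_incr_1 by (apply Fk_series_ex; lra).
  assert (E : aser (PI * alpha / y) (PI - PI / (4 * y ^ 2)) 0 = - (2 * exp (- (PI * alpha / y)) * cos (PI / (4 * y ^ 2)))).
  { unfold aser, Ck. rewrite Fk_pow. replace (INR 1 * (PI - PI / (4 * y ^ 2))) with (PI - PI / (4 * y ^ 2)) by (simpl; ring).
    rewrite Rtrigo_facts.cos_pi_minus. simpl. ring. }
  rewrite E. pose proof (tail_bound _ (PI - PI / (4 * y ^ 2)) hL hq).
  match goal with |- Rabs ?X <= _ => replace X with (Series (fun k => aser (PI * alpha / y) (PI - PI / (4 * y ^ 2)) (S k))) by ring end.
  exact H.
Qed.

Lemma G_eq' alpha y : 0 < y -> G alpha y = 1 + Series (aser (PI*alpha/y) (PI - PI/(4*y^2))).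
Proof. intros hy. rewrite G_eq by lra. reflexivity. Qed.

Lemma cos_ge_half t : 0 <= t <= PI/3 -> 1/2 <= cos t.
Proof.
  intros ht. rewrite <- cos_PI3. destruct (Req_dec t (PI/3)). subst; lra.
  left. apply cos_decreasing_1; pose proof PI_RGT_0; lra.
Qed.

Lemma cos_ge_quad t : 0 <= t <= 1 -> 1 - t^2/2 <= cos t.
Proof.
  intros ht. destruct (cos_bound t 0) as [H _]; try (pose proof PI2_1; lra).
  unfold cos_approx, cos_term in H. simpl in H.
  replace (1 * (1 / 1) + -1 * 1 * (t * (t * 1) / (1 + 1))) with (1 - t^2/2) in H by (simpl; field). exact H.
Qed.

Theorem mainTheorem15 (alpha : R) (halpha : 1 <= alpha) :
  let y0 := sqrt 3 / 2 + 1 / (4 * sqrt alpha) in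
  (forall y : R, y0 <= y -> G alpha y <= G alpha y0) /\
  G alpha y0 <= G alpha (sqrt 3 / 2)
                - 2 * sqrt alpha / 3 * exp (- (2 * PI * alpha / sqrt 3)).
Proof.
  intros y0.
  pose proof PI2_3_2 as Pl. pose proof PI_4 as Pu.
  set (sa := sqrt alpha) in *.
  assert (hsa : 1 <= sa) by (unfold sa; rewrite <- sqrt_1; apply sqrt_le_1_alt; lra).
  assert (hsa2 : sa * sa = alpha) by (unfold sa; apply sqrt_sqrt; lra).
  set (r3 := sqrt 3) in *.
  assert (hr3 : r3 * r3 = 3) by (unfold r3; apply sqrt_sqrt; lra).
  assert (hr3p : 0 <= r3) by (unfold r3; apply sqrt_pos).
  assert (hr3b : 1.732 <= r3 <= 1.7321) by (split; nra).
  assert (hinv : 0 < 1 / (4 * sa) <= 1/4).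
  { split. apply Rdiv_lt_0_compat; lra. apply Rmult_le_reg_r with (4 * sa). lra.
    replace (1 / (4 * sa) * (4 * sa)) with 1 by (field; lra). nra. }
  assert (hy0 : r3 / 2 < y0 <= 1.11605) by (unfold y0; lra).
  assert (hy0sq : 3/4 <= y0 ^ 2) by nra.
  assert (hal : 0 < alpha) by lra.
  set (L0 := PI * alpha / y0).
  assert (hL0 : 2.688 <= L0).
  { unfold L0. apply Rmult_le_reg_r with y0; [lra|]. replace (PI * alpha / y0 * y0) with (PI * alpha) by (field; lra). nra. }
  set (q0 := exp (- L0)).
  assert (hq0 : q0 <= 0.0757) by (apply N2688; lra).
  assert (hq0p : 0 < q0) by apply exp_pos.
  set (th0 := PI / (4 * y0 ^ 2)).
  assert (hth0 : 0 <= th0 <= PI / 3).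
  { unfold th0. split. apply Rlt_le, Rdiv_lt_0_compat; lra.
    apply Rmult_le_reg_r with (4 * y0 ^ 2); [lra|]. replace (PI / (4 * y0 ^ 2) * (4 * y0 ^ 2)) with PI by (field; lra). nra. }
  assert (hc0 : 1/2 <= cos th0 <= 1) by (split; [apply cos_ge_half; lra | apply COS_bound]).
  pose proof (G_approx alpha y0 ltac:(lra) hal ltac:(fold L0 q0; lra)) as GA0. fold L0 q0 th0 in GA0.
  apply Rabs_le_between in GA0.
  assert (hq04 : q0 ^ 4 <= 0.0001) by (assert (q0^4 <= 0.0757^4) by (apply pow_incr; lra); simpl in *; lra).
  assert (q0 * cos th0 <= q0 * 1) by (apply Rmult_le_compat_l; lra).
  assert (Gy0lo : 0.847 <= G alpha y0) by lra.
  split.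
  - intros y hy.
    assert (hyp : 0 < y) by lra.
    set (L := PI * alpha / y).
    assert (hLp : 0 < L) by (unfold L; apply Rdiv_lt_0_compat; nra).
    set (th := PI / (4 * y ^ 2)).
    destruct (Rle_lt_dec L 0.65) as [Hfar | Hnear].
    +
      assert (EL : L * y = PI * alpha) by (unfold L; field; lra).
      assert (hyb : 4.6 <= y) by nra.
      assert (hth : 0 <= th <= 0.05).
      { unfold th. split. apply Rlt_le, Rdiv_lt_0_compat; nra.
        apply Rmult_le_reg_r with (4 * y ^ 2); [nra|]. replace (PI / (4 * y ^ 2) * (4 * y ^ 2)) with PI by (field; lra). nra. }
      assert (hc : 0.998 <= cos th) by (pose proof (cos_ge_quad th ltac:(lra)); nra).
      pose proof (far_bound L (PI - th) hLp) as FB.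
      rewrite Rtrigo_facts.cos_pi_minus in FB. specialize (FB ltac:(lra)).
      fold (aser L (PI - th)) in FB.
      rewrite G_eq' by lra. fold L th.
      assert (hsq : sqrt L <= 0.8063).
      { pose proof (sqrt_pos L). pose proof (sqrt_sqrt L ltac:(lra)). nra. }
      pose proof (Rle_abs (1 + Series (aser L (PI - th)))).
      pose proof (Rabs_pos (1 + Series (aser L (PI - th)))).
      nra.
    +
      rewrite (G_eq' alpha y) by lra. rewrite (G_eq' alpha y0) by lra. fold L th L0 th0.
      apply Rplus_le_compat_l.
      assert (hLL : L <= L0).
      { unfold L, L0. unfold Rdiv. apply Rmult_le_compat_l. nra. apply Rinv_le_contravar; lra. }
      assert (hq : exp (- L) <= 0.55) by (apply N065; lra).
      assert (hthth : 0 <= th <= th0).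
      { unfold th, th0. split. apply Rlt_le, Rdiv_lt_0_compat; nra.
        unfold Rdiv. apply Rmult_le_compat_l. lra. apply Rinv_le_contravar. nra. nra. }
      apply near_cmp; try lra. { fold q0; lra. }
      destruct (Rle_lt_dec y 2) as [Hy2 | Hy2].
      * assert (hq2 : exp (- L) <= 0.26).
        { apply N15. unfold L. apply Rmult_le_reg_r with y; [lra|].
          replace (PI * alpha / y * y) with (PI * alpha) by (field; lra). nra. }
        pose proof (exp_pos (-L)).
        assert (exp (-L) ^ 3 <= 0.26 ^ 3) by (apply pow_incr; lra).
        assert (1/2 <= cos th) by (apply cos_ge_half; lra).
        set (e := exp (-L)) in *. simpl in *. lra.
      * assert (hth : 0 <= th <= 0.25).
        { unfold th. split. apply Rlt_le, Rdiv_lt_0_compat; nra.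
          apply Rmult_le_reg_r with (4 * y ^ 2); [nra|]. replace (PI / (4 * y ^ 2) * (4 * y ^ 2)) with PI by (field; lra). nra. }
        pose proof (cos_ge_quad th ltac:(lra)). pose proof (exp_pos (-L)).
        assert (exp (-L) ^ 3 <= 0.55 ^ 3) by (apply pow_incr; lra).
        set (e := exp (-L)) in *. simpl in *. nra.
  -
    set (s := r3 / 2).
    assert (hsp : 0 < s) by (unfold s; lra).
    set (Ls := PI * alpha / s).
    assert (hLs : 2.688 <= Ls).
    { unfold Ls. apply Rmult_le_reg_r with s; [lra|]. replace (PI * alpha / s * s) with (PI * alpha) by (field; lra). unfold s. nra. }
    set (p := exp (- Ls)).
    assert (hp : p <= 0.0757) by (apply N2688; lra).
    assert (hpp : 0 < p) by apply exp_pos.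
    assert (Ep : exp (- (2 * PI * alpha / r3)) = p) by (unfold p, Ls, s; f_equal; field; lra).
    rewrite Ep.
    pose proof (G_approx alpha s hsp hal ltac:(fold Ls p; lra)) as GAs. fold Ls p in GAs.
    assert (Ths : PI / (4 * s ^ 2) = PI / 3) by (unfold s; f_equal; simpl; nra).
    rewrite Ths, cos_PI3 in GAs. apply Rabs_le_between in GAs.
    assert (hp4 : p ^ 4 <= p * 0.000434).
    { assert (p^3 <= 0.0757^3) by (apply pow_incr; lra). replace (p^4) with (p * p^3) by (simpl; ring). simpl in *. nra. }
    assert (hq04' : q0 ^ 4 <= q0 * 0.000434).
    { assert (q0^3 <= 0.0757^3) by (apply pow_incr; lra). replace (q0^4) with (q0 * q0^3) by (simpl; ring). simpl in *. nra. }
    set (x := Ls - L0).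
    assert (Hx : x * (4 * s * y0) = PI * sa).
    { unfold x, Ls, L0, y0, s. rewrite <- hsa2. field. split; [|split]; try lra. nra. }
    assert (hsy : 4 * s * y0 <= 3.8664) by (unfold s; nra).
    assert (hsy0 : 0 < 4 * s * y0) by (unfold s; nra).
    assert (hxsa : 0.775 * sa <= x).
    { apply Rmult_le_reg_r with (4 * s * y0); [lra|]. rewrite Hx.
      assert (0.775 * sa * (4 * s * y0) <= 0.775 * sa * 3.8664) by (apply Rmult_le_compat_l; lra). nra. }
    assert (Eq0 : q0 = p * exp x) by (unfold q0, p, x; rewrite <- exp_plus; f_equal; ring).
    pose proof (exp_ineq1_le x).
    assert (hpq : p * (1 + 0.775 * sa) <= q0) by (rewrite Eq0; apply Rmult_le_compat_l; lra).
    nra.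
Qed.
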